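(* For every graph $U$ containing no $K_{\aleph_0}$ subgraph, there is a graph $\widehat{U}\in\mathcal{D}(U)$ that contains every graph in $\mathcal{D}(U)$.
   Context: All graphs are simple and countable; $G$ contains $H$ if $H$ is isomorphic to a subgraph of $G$. A tree-decomposition of $G$ is a family $(B_x:x\in V(T))$ of subsets of $V(G)$ indexed by a tree $T$ with every edge of $G$ inside some bag and, for each vertex $v$, $\{x:v\in B_x\}$ inducing a nonempty subtree of $T$. The torso of a node $x$ is the graph obtained from $G[B_x]$ by adding an edge $vw$ whenever $v,w\in B_x\cap B_y$ for some edge $xy\in E(T)$. $\mathcal{D}(U)$ is the class of graphs having a tree-decomposition in which every torso is isomorphic to a subgraph of $U$. *)

(* Defs.v *)
From Stdlib Require Import List.
Import ListNotations.

Record graph := Graph {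
  vert : Type;
  adj : vert -> vert -> Prop;
  adj_sym : forall x y, adj x y -> adj y x;
  adj_irrefl : forall x, ~ adj x x;
  vert_countable : exists f : vert -> nat, forall x y, f x = f y -> x = y
}.

(** G contains H: H is isomorphic to a (not necessarily induced) subgraph of G,
    i.e. there is an injective adjacency-preserving map H -> G. *)
Definition contains (G H : graph) : Prop :=
  exists f : vert H -> vert G,
    (forall x y, f x = f y -> x = y) /\
    (forall x y, adj H x y -> adj G (f x) (f y)).

Definition contains_Kaleph0 (G : graph) : Prop :=
  exists f : nat -> vert G,
    (forall i j, f i = f j -> i = j) /\
    (forall i j, i <> j -> adj G (f i) (f j)).

(** Walks in an abstract relation [E], all of whose vertices lie in [S]:
    [walk_in E S x l y] means x = l_0, l_0 ... l_n = y consecutive E-adjacent,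
    the list [x :: l] listing the vertices. *)
Fixpoint walk_in {X : Type} (E : X -> X -> Prop) (S : X -> Prop)
    (x : X) (l : list X) (y : X) : Prop :=
  match l with
  | [] => S x /\ x = y
  | z :: l' => S x /\ E x z /\ walk_in E S z l' y
  end.

Definition has_cycle {X : Type} (E : X -> X -> Prop) : Prop :=
  exists (x : X) (l : list X) (y : X),
    NoDup (x :: l) /\ 2 <= length l /\ walk_in E (fun _ => True) x l y /\ E y x.

Record tree := Tree {
  tnode : Type;
  tadj : tnode -> tnode -> Prop;
  tadj_sym : forall x y, tadj x y -> tadj y x;
  tadj_irrefl : forall x, ~ tadj x x;
  tconnected : forall x y, exists l, walk_in tadj (fun _ => True) x l y;
  tacyclic : ~ has_cycle tadj
}.

Definition is_tree_decomposition (G : graph) (T : tree)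
    (B : tnode T -> vert G -> Prop) : Prop :=
  (forall v w, adj G v w -> exists x, B x v /\ B x w) /\
  (forall v, (exists x, B x v) /\
     forall x y, B x v -> B y v ->
       exists l, walk_in (tadj T) (fun z => B z v) x l y).

Definition torso_adj (G : graph) (T : tree) (B : tnode T -> vert G -> Prop)
    (x : tnode T) (v w : vert G) : Prop :=
  B x v /\ B x w /\ v <> w /\
  (adj G v w \/ exists y, tadj T x y /\ B y v /\ B y w).

Definition torso_in (U G : graph) (T : tree) (B : tnode T -> vert G -> Prop)
    (x : tnode T) : Prop :=
  exists f : vert G -> vert U,
    (forall v w, B x v -> B x w -> f v = f w -> v = w) /\
    (forall v w, torso_adj G T B x v w -> adj U (f v) (f w)).

Definition inD (U G : graph) : Prop :=
  exists (T : tree) (B : tnode T -> vert G -> Prop),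
    is_tree_decomposition G T B /\ forall x, torso_in U G T B x.

(* Main.v *)
Require Import Defs.
From Stdlib Require Import List Lia Arith Classical ClassicalEpsilon ProofIrrelevance Cantor.
Import ListNotations.

Lemma walk_app {X} (E : X -> X -> Prop) S x l1 y l2 z :
  walk_in E S x l1 y -> walk_in E S y l2 z -> walk_in E S x (l1 ++ l2) z.
Proof.
  revert x. induction l1 as [|a l1 IH]; simpl; intros x H1 H2.
  - destruct H1 as [_ ->]. exact H2.
  - destruct H1 as [Hs [He Hw]]. split; [exact Hs|split; [exact He|]]. apply IH; auto.
Qed.

Lemma walk_fun {X} (E : X -> X -> Prop) Q n : forall g : nat -> X,
  (forall k, k < n -> E (g k) (g (S k))) -> (forall k, k <= n -> Q (g k)) ->
  walk_in E Q (g 0) (map g (seq 1 n)) (g n).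
Proof.
  induction n as [|n IH]; intros g HE HS; simpl.
  - split; [apply HS; lia|reflexivity].
  - split; [apply HS; lia|]. split; [apply HE; lia|].
    rewrite <- seq_shift, map_map.
    apply (IH (fun k => g (S k))); intros; [apply HE|apply HS]; lia.
Qed.

Lemma walk_nth {X} (E : X -> X -> Prop) Q l : forall x y, walk_in E Q x l y ->
  (forall k, k < length l -> E (nth k (x::l) x) (nth (S k) (x::l) x)) /\
  (forall k, k <= length l -> Q (nth k (x::l) x)) /\ nth (length l) (x::l) x = y.
Proof.
  induction l as [|a l IH]; intros x y H.
  - destruct H as [Hs ->]. split; [simpl; intros; lia|split; [intros k Hk; destruct k; [exact Hs|simpl in Hk; lia]|reflexivity]].
  - destruct H as [Hs [He Hw]]. destruct (IH _ _ Hw) as [H1 [H2 H3]].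
    assert (Hsh : forall k, k <= length l -> nth (S k) (x::a::l) x = nth k (a::l) a).
    { intros k Hk. change (nth (S k) (x::a::l) x) with (nth k (a::l) x). apply nth_indep. simpl; lia. }
    simpl length. split; [|split].
    + intros [|k] Hk.
      * change (nth 0 (x::a::l) x) with x. rewrite (Hsh 0) by lia. exact He.
      * rewrite (Hsh k), (Hsh (S k)) by lia. apply H1; lia.
    + intros [|k] Hk; [exact Hs|]. rewrite Hsh by lia. apply H2; lia.
    + rewrite Hsh by lia. exact H3.
Qed.

Lemma exit_index (P : nat -> Prop) n : P 0 -> ~ P n -> exists k, k < n /\ P k /\ ~ P (S k).
Proof.
  induction n as [|n IH]; intros H0 Hn; [contradiction|].
  destruct (classic (P n)) as [Hp|Hp].
  - exists n; auto.
  - destruct (IH H0 Hp) as [k ?]; exists k; intuition lia.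
Qed.

Lemma max_index (h : nat -> nat) n : exists i, i <= n /\ forall k, k <= n -> h k <= h i.
Proof.
  induction n as [|n IH].
  - exists 0; split; [lia|]; intros k Hk; replace k with 0 by lia; lia.
  - destruct IH as [i [Hi Hm]].
    destruct (le_lt_dec (h (S n)) (h i)).
    + exists i; split; [lia|]; intros k Hk. destruct (Nat.eq_dec k (S n)); [subst; lia|apply Hm; lia].
    + exists (S n); split; [lia|]; intros k Hk. destruct (Nat.eq_dec k (S n)); [subst; lia|].
      specialize (Hm k ltac:(lia)); lia.
Qed.

Definition countable (X : Type) := exists f : X -> nat, forall x y, f x = f y -> x = y.

Lemma to_nat_inj p q : Cantor.to_nat p = Cantor.to_nat q -> p = q.
Proof. intros H. rewrite <- (cancel_of_to p), <- (cancel_of_to q), H. reflexivity. Qed.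

Lemma countable_prod X Y : countable X -> countable Y -> countable (X * Y).
Proof.
  intros [f Hf] [g Hg]. exists (fun p => Cantor.to_nat (f (fst p), g (snd p))).
  intros [a b] [c d] H. apply to_nat_inj in H. simpl in H. inversion H.
  f_equal; auto.
Qed.

Fixpoint codel (l : list nat) : nat :=
  match l with [] => 0 | a :: l => S (Cantor.to_nat (a, codel l)) end.

Lemma codel_inj l1 : forall l2, codel l1 = codel l2 -> l1 = l2.
Proof.
  induction l1 as [|a l1 IH]; intros [|b l2]; cbn [codel]; intros H; try discriminate; auto.
  apply eq_add_S in H. apply to_nat_inj in H. inversion H. f_equal; auto.
Qed.

Lemma countable_list X : countable X -> countable (list X).
Proof.
  intros [f Hf]. exists (fun l => codel (map f l)). intros l1 l2 H.
  apply codel_inj in H. revert l2 H; induction l1 as [|a l1 IH]; intros [|b l2] H; simpl in *;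
  try discriminate; auto. inversion H. f_equal; auto.
Qed.

Lemma countable_nat : countable nat.
Proof. exists (fun n => n); auto. Qed.

Lemma countable_sig X (P : X -> Prop) : countable X -> countable {x | P x}.
Proof.
  intros [f Hf]. exists (fun x => f (proj1_sig x)). intros [a pa] [b pb] H. simpl in H.
  apply Hf in H. subst. f_equal. apply proof_irrelevance.
Qed.

Lemma clique_finite (U : graph) (HU : ~ contains_Kaleph0 U) X (P : X -> Prop) (h : X -> vert U) :
  (forall a b, P a -> P b -> h a = h b -> a = b) ->
  (forall a b, P a -> P b -> a <> b -> adj U (h a) (h b)) ->
  exists l, forall a, In a l <-> P a.
Proof.
  intros Hinj Hcl.
  destruct (classic (exists l, forall a, P a -> In a l)) as [[l Hl]|Hno].
  - exists (filter (fun a => if excluded_middle_informative (P a) then true else false) l).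
    intros a. rewrite filter_In. destruct (excluded_middle_informative (P a)) as [Hp|Hp]; split; intros H.
    + exact Hp.
    + split; [apply Hl, H|reflexivity].
    + destruct H as [_ H]; discriminate.
    + contradiction.
  - exfalso. apply HU.
    assert (Hex : forall l, exists a, P a /\ ~ In a l).
    { intros l. apply NNPP; intros Hn. apply Hno. exists l. intros a Ha.
      apply NNPP; intros Hi. apply Hn; eauto. }
    set (pick := fun l => proj1_sig (constructive_indefinite_description _ (Hex l))).
    assert (Hpick : forall l, P (pick l) /\ ~ In (pick l) l).
    { intros l. unfold pick. destruct (constructive_indefinite_description _ _); auto. }
    set (s := fix s n := match n with 0 => [] | S n => pick (s n) :: s n end).
    set (e := fun n => pick (s n)).
    assert (Hin : forall m n, m < n -> In (e m) (s n)).
    { intros m n; induction n; intros H; [lia|]. simpl. destruct (Nat.eq_dec m n); [subst; left; reflexivity|].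
      right; apply IHn; lia. }
    assert (Hei : forall m n, e m = e n -> m = n).
    { intros m n H. destruct (lt_eq_lt_dec m n) as [[Hl|Hl]|Hl]; auto.
      - exfalso. apply (proj2 (Hpick (s n))). fold (e n). rewrite <- H. apply Hin; auto.
      - exfalso. apply (proj2 (Hpick (s m))). fold (e m). rewrite H. apply Hin; auto. }
    exists (fun n => h (e n)). split.
    + intros i j H. apply Hei, Hinj; auto; apply Hpick.
    + intros i j Hij. apply Hcl; try apply Hpick. intros H; apply Hij, Hei, H.
Qed.
Import ListNotations.

Section UHat.
Variable U : graph.

Definition dec_eq (a b : vert U) : bool := if excluded_middle_informative (a = b) then true else false.
Lemma dec_eq_spec a b : dec_eq a b = true <-> a = b.
Proof. unfold dec_eq; destruct (excluded_middle_informative (a = b)); split; congruence. Qed.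

Definition valid (gl : list (vert U * vert U)) : Prop :=
 (forall p q, In p gl -> In q gl -> (fst p = fst q <-> snd p = snd q)) /\
 (forall p q, In p gl -> In q gl -> fst p <> fst q -> adj U (fst p) (fst q)) /\
 (forall p q, In p gl -> In q gl -> snd p <> snd q -> adj U (snd p) (snd q)).

Definition Step := { g : list (vert U * vert U) * nat | valid (fst g) }.
Definition glue (st : Step) := fst (proj1_sig st).
Lemma glue_valid st : valid (glue st).
Proof. exact (proj2_sig st). Qed.

Definition lookup (gl : list (vert U * vert U)) (u : vert U) : option (vert U) :=
  match find (fun p => dec_eq (snd p) u) gl with Some p => Some (fst p) | None => None end.

Lemma lookup_some gl u k : lookup gl u = Some k -> In (k,u) gl.
Proof.
  unfold lookup. destruct (find _ gl) as [p|] eqn:F; [|discriminate]. intros H; injection H as <-.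
  apply find_some in F. destruct F as [Hi He]. apply dec_eq_spec in He. destruct p; simpl in *; subst; auto.
Qed.

Lemma lookup_none gl u : lookup gl u = None -> forall k, ~ In (k,u) gl.
Proof.
  unfold lookup. destruct (find _ gl) as [p|] eqn:F; [discriminate|]. intros _ k Hi.
  pose proof (find_none _ _ F _ Hi) as H. simpl in H. 
  assert (dec_eq u u = true) by (apply dec_eq_spec; reflexivity). congruence.
Qed.

Lemma lookup_in gl u k : valid gl -> In (k,u) gl -> lookup gl u = Some k.
Proof.
  intros Hv Hi. destruct (lookup gl u) as [k'|] eqn:L.
  - apply lookup_some in L. f_equal. apply (proj1 Hv _ _ L Hi). reflexivity.
  - exfalso; exact (lookup_none _ _ L _ Hi).
Qed.

Fixpoint resolve (s : list Step) (u : vert U) : list Step * vert U :=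
  match s with
  | [] => ([], u)
  | st :: s' => match lookup (glue st) u with Some k => resolve s' k | None => (st :: s', u) end
  end.

Lemma resolve_suffix s : forall u, exists p, s = p ++ fst (resolve s u).
Proof.
  induction s as [|st s IH]; intros u; simpl.
  - exists []; reflexivity.
  - destruct (lookup (glue st) u) as [k|].
    + destruct (IH k) as [p Hp]. exists (st :: p). simpl; congruence.
    + exists []; reflexivity.
Qed.

Lemma resolve_fix s : forall u, resolve (fst (resolve s u)) (snd (resolve s u)) = resolve s u.
Proof.
  induction s as [|st s IH]; intros u; simpl; [reflexivity|].
  destruct (lookup (glue st) u) as [k|] eqn:L; [apply IH|]. simpl. rewrite L. reflexivity.
Qed.

Lemma resolve_inj s : forall u1 u2, resolve s u1 = resolve s u2 -> u1 = u2.
Proof.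
  induction s as [|st s IH]; intros u1 u2; simpl.
  - congruence.
  - destruct (lookup (glue st) u1) as [k1|] eqn:L1; destruct (lookup (glue st) u2) as [k2|] eqn:L2.
    + intros H. apply IH in H. subst. apply lookup_some in L1, L2.
      apply (proj1 (glue_valid st) _ _ L1 L2). reflexivity.
    + intros H. destruct (resolve_suffix s k1) as [p Hp]. rewrite H in Hp. simpl in Hp.
      apply (f_equal (@length _)) in Hp. rewrite length_app in Hp. simpl in Hp. lia.
    + intros H. destruct (resolve_suffix s k2) as [p Hp]. rewrite <- H in Hp. simpl in Hp.
      apply (f_equal (@length _)) in Hp. rewrite length_app in Hp. simpl in Hp. lia.
    + congruence.
Qed.

Definition VH := { p : list Step * vert U | resolve (fst p) (snd p) = p }.
Definition R s u : VH := exist _ (resolve s u) (resolve_fix s u).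

Lemma VH_eq (v w : VH) : proj1_sig v = proj1_sig w -> v = w.
Proof. destruct v, w; simpl; intros; subst; f_equal; apply proof_irrelevance. Qed.

Lemma R_inj s u1 u2 : R s u1 = R s u2 -> u1 = u2.
Proof. intros H. apply (f_equal (@proj1_sig _ _)) in H. simpl in H. eapply resolve_inj; eauto. Qed.

Definition adjH (v w : VH) : Prop := exists s a b, R s a = v /\ R s b = w /\ adj U a b.

Lemma adjH_sym v w : adjH v w -> adjH w v.
Proof. intros [s [a [b [H1 [H2 H3]]]]]. exists s, b, a. split; [|split]; auto. apply adj_sym; auto. Qed.

Lemma adjH_irrefl v : ~ adjH v v.
Proof.
  intros [s [a [b [H1 [H2 H3]]]]]. rewrite <- H2 in H1. apply R_inj in H1. subst. exact (adj_irrefl _ _ H3).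
Qed.

Lemma VH_countable : exists f : VH -> nat, forall x y, f x = f y -> x = y.
Proof.
  apply countable_sig. apply countable_prod; [|exact (vert_countable U)].
  apply countable_list. apply countable_sig. apply countable_prod; [|apply countable_nat].
  apply countable_list. apply countable_prod; exact (vert_countable U).
Qed.

Definition Uhat : graph := Graph VH adjH adjH_sym adjH_irrefl VH_countable.

Definition tadjL (s t : list Step) : Prop := (exists st, t = st :: s) \/ (exists st, s = st :: t).

Lemma tadjL_sym s t : tadjL s t -> tadjL t s.
Proof. unfold tadjL; tauto. Qed.

Lemma tadjL_irrefl s : ~ tadjL s s.
Proof.
  intros [[st H]|[st H]]; apply (f_equal (@length _)) in H; simpl in H; lia.
Qed.

Lemma skipn_cons_nth {X} (s : list X) k d : k < length s -> skipn k s = nth k s d :: skipn (S k) s.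
Proof.
  revert k; induction s as [|a s IH]; intros k Hk; simpl in Hk; [lia|].
  destruct k; [reflexivity|]. simpl. apply IH. lia.
Qed.

Lemma up_walk (P : list Step -> Prop) s n : n <= length s -> (forall k, k <= n -> P (skipn k s)) ->
  exists l, walk_in tadjL P s l (skipn n s).
Proof.
  intros Hn HP. exists (map (fun k => skipn k s) (seq 1 n)).
  pose proof (walk_fun tadjL P n (fun k => skipn k s)) as W. simpl in W.
  apply W; auto. intros k Hk. right.
  destruct s as [|a s']; [simpl in Hn; lia|].
  exists (nth k (a::s') a). exact (skipn_cons_nth (a::s') k a ltac:(lia)).
Qed.

Lemma down_walk (P : list Step -> Prop) s n : n <= length s -> (forall k, k <= n -> P (skipn k s)) ->
  exists l, walk_in tadjL P (skipn n s) l s.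
Proof.
  intros Hn HP. exists (map (fun k => skipn (n - k) s) (seq 1 n)).
  pose proof (walk_fun tadjL P n (fun k => skipn (n - k) s)) as W. simpl in W.
  rewrite Nat.sub_0_r, Nat.sub_diag in W. apply W.
  - intros k Hk. left. destruct s as [|a s']; [simpl in Hn; lia|].
    exists (nth (n - S k) (a::s') a). rewrite (skipn_cons_nth _ (n - S k) a) by lia.
    f_equal. f_equal. lia.
  - intros k Hk. apply HP. lia.
Qed.

Lemma tconn s t : exists l, walk_in tadjL (fun _ => True) s l t.
Proof.
  destruct (up_walk (fun _ => True) s (length s)) as [l1 W1]; auto.
  destruct (down_walk (fun _ => True) t (length t)) as [l2 W2]; auto.
  rewrite skipn_all in W1, W2. exists (l1 ++ l2). eapply walk_app; eauto.
Qed.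

Lemma tadjL_down a b : tadjL a b -> length b <= length a -> exists st, a = st :: b.
Proof.
  intros [[st H]|[st H]] Hl; [subst; simpl in Hl; lia|eauto].
Qed.

Lemma tacyc : ~ has_cycle tadjL.
Proof.
  intros [x [l [y [Hnd [Hlen [Hw He]]]]]].
  destruct (walk_nth _ _ _ _ _ Hw) as [HE [_ Hy]].
  set (n := length l) in *. set (g := fun k => nth k (x::l) x) in *.
  assert (Hcyc : tadjL (g n) (g 0)) by (unfold g; rewrite Hy; exact He).
  destruct (max_index (fun k => length (g k)) n) as [i [Hi Hm]].
  set (p := if Nat.eq_dec i 0 then n else i - 1).
  set (q := if Nat.eq_dec i n then 0 else S i).
  assert (Hp : tadjL (g i) (g p) /\ p <= n).
  { unfold p; destruct (Nat.eq_dec i 0); [subst; split; [apply tadjL_sym, Hcyc|lia]|].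
    split; [|lia]. apply tadjL_sym. assert (HE' := HE (i-1) ltac:(lia)).
    replace (S (i-1)) with i in HE' by lia. exact HE'. }
  assert (Hq : tadjL (g i) (g q) /\ q <= n).
  { unfold q; destruct (Nat.eq_dec i n); [subst; split; [exact Hcyc|lia]|].
    split; [|lia]. apply HE. lia. }
  destruct (tadjL_down _ _ (proj1 Hp) (Hm _ (proj2 Hp))) as [st1 E1].
  destruct (tadjL_down _ _ (proj1 Hq) (Hm _ (proj2 Hq))) as [st2 E2].
  rewrite E1 in E2. injection E2 as _ E2.
  assert (p = q).
  { apply (proj1 (NoDup_nth (x::l) x) Hnd); simpl; try lia. exact E2. }
  unfold p, q in *. destruct (Nat.eq_dec i 0), (Nat.eq_dec i n); lia.
Qed.

Definition TH : tree := Tree (list Step) tadjL tadjL_sym tadjL_irrefl tconn tacyc.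

Definition BH (s : list Step) (v : VH) : Prop := exists u, R s u = v.
Definition home (v : VH) := fst (proj1_sig v).

Lemma BH_home v : BH (home v) v.
Proof.
  exists (snd (proj1_sig v)). apply VH_eq. simpl. unfold home. exact (proj2_sig v).
Qed.

Lemma BH_suffix s v : BH s v -> exists p, s = p ++ home v.
Proof. intros [u <-]. apply resolve_suffix. Qed.

Lemma BH_up st s v : BH (st :: s) v -> home v <> st :: s -> BH s v.
Proof.
  intros [u Hu] Hh. destruct (lookup (glue st) u) as [k|] eqn:L.
  - exists k. apply VH_eq. rewrite <- Hu. simpl. rewrite L. reflexivity.
  - exfalso. apply Hh. rewrite <- Hu. unfold home. simpl. rewrite L. reflexivity.
Qed.

Lemma BH_mid p : forall s v, BH (p ++ s) v -> (exists q, s = q ++ home v) -> BH s v.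
Proof.
  induction p as [|a p IH]; intros s v H Hq; [exact H|].
  apply IH; auto. apply (BH_up a). exact H. intros E. destruct Hq as [q Hq].
  apply (f_equal (@length _)) in E. rewrite Hq in E. simpl in E. rewrite !length_app in E. lia.
Qed.

Lemma walk_to_home s v : BH s v -> exists l, walk_in tadjL (fun z => BH z v) s l (home v).
Proof.
  intros Hs. destruct (BH_suffix _ _ Hs) as [p Hp].
  assert (Hsk : skipn (length p) s = home v) by (rewrite Hp, skipn_app, skipn_all, Nat.sub_diag; reflexivity).
  rewrite <- Hsk. apply up_walk.
  - rewrite Hp, length_app. lia.
  - intros k Hk. apply (BH_mid (firstn k s)). rewrite firstn_skipn. exact Hs.
    exists (skipn k p). rewrite Hp, skipn_app. replace (k - length p) with 0 by lia. reflexivity.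
Qed.

Lemma walk_from_home s v : BH s v -> exists l, walk_in tadjL (fun z => BH z v) (home v) l s.
Proof.
  intros Hs. destruct (BH_suffix _ _ Hs) as [p Hp].
  assert (Hsk : skipn (length p) s = home v) by (rewrite Hp, skipn_app, skipn_all, Nat.sub_diag; reflexivity).
  rewrite <- Hsk. apply down_walk.
  - rewrite Hp, length_app. lia.
  - intros k Hk. apply (BH_mid (firstn k s)). rewrite firstn_skipn. exact Hs.
    exists (skipn k p). rewrite Hp, skipn_app. replace (k - length p) with 0 by lia. reflexivity.
Qed.

Lemma Uhat_td : is_tree_decomposition Uhat TH BH.
Proof.
  split.
  - intros v w [s [a [b [H1 [H2 _]]]]]. exists s. split; [exists a|exists b]; auto.
  - intros v. split; [exists (home v); apply BH_home|].
    intros x y Hx Hy. destruct (walk_to_home _ _ Hx) as [l1 W1]. destruct (walk_from_home _ _ Hy) as [l2 W2].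
    exists (l1 ++ l2). eapply walk_app; eauto.
Qed.

Definition fs (s : list Step) (v : VH) : vert U :=
  match excluded_middle_informative (exists u, R s u = v) with
  | left H => proj1_sig (constructive_indefinite_description _ H)
  | right _ => snd (proj1_sig v) end.

Lemma fs_spec s v : BH s v -> R s (fs s v) = v.
Proof.
  intros H. unfold fs. destruct (excluded_middle_informative _) as [H'|H']; [|contradiction].
  destruct (constructive_indefinite_description _ _); auto.
Qed.

Lemma home_len s v : BH s v -> length (home v) <= length s.
Proof. intros H. destruct (BH_suffix _ _ H) as [p ->]. rewrite length_app. lia. Qed.

Lemma glued_child st s v : BH (st::s) v -> BH s v -> exists a k, In (k,a) (glue st) /\ R s k = v.
Proof.
  intros [a Ha] Hs. exists a. destruct (lookup (glue st) a) as [k|] eqn:L.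
  - exists k. split; [apply lookup_some; auto|]. apply VH_eq. rewrite <- Ha. simpl. rewrite L. reflexivity.
  - exfalso. pose proof (home_len _ _ Hs). rewrite <- Ha in H. unfold home in H. simpl in H.
    rewrite L in H. simpl in H. lia.
Qed.

Lemma glued_parent st t u v : R (st::t) u = v -> BH t v -> exists k, In (k,u) (glue st).
Proof.
  intros Hu Ht. destruct (lookup (glue st) u) as [k|] eqn:L.
  - exists k; apply lookup_some; auto.
  - exfalso. pose proof (home_len _ _ Ht). rewrite <- Hu in H. unfold home in H. simpl in H.
    rewrite L in H. simpl in H. lia.
Qed.

Lemma nbr_case s t v w : BH s v -> BH s w -> v <> w -> tadjL s t -> BH t v -> BH t w ->
  adj U (fs s v) (fs s w).
Proof.
  intros Hv Hw Hne Ht Htv Htw.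
  pose proof (fs_spec _ _ Hv) as E1. pose proof (fs_spec _ _ Hw) as E2.
  assert (Hn : fs s v <> fs s w) by (intros E; apply Hne; rewrite <- E1, <- E2, E; reflexivity).
  destruct Ht as [[st ->]|[st ->]].
  - destruct (glued_child _ _ _ Htv Hv) as [a [k [Hi Hk]]].
    destruct (glued_child _ _ _ Htw Hw) as [b [k' [Hi' Hk']]].
    rewrite <- E1 in Hk. apply R_inj in Hk. rewrite <- E2 in Hk'. apply R_inj in Hk'. subst.
    apply (proj1 (proj2 (glue_valid st)) _ _ Hi Hi'). simpl. exact Hn.
  - destruct (glued_parent _ _ _ _ E1 Htv) as [k Hi].
    destruct (glued_parent _ _ _ _ E2 Htw) as [k' Hi'].
    apply (proj2 (proj2 (glue_valid st)) _ _ Hi Hi'). simpl. exact Hn.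
Qed.

Lemma nbr_exists s s0 v w : s <> s0 -> BH s v -> BH s0 v -> BH s w -> BH s0 w ->
  exists t, tadjL s t /\ BH t v /\ BH t w.
Proof.
  intros Hne Hsv Hs0v Hsw Hs0w.
  destruct (classic (exists p, s0 = p ++ s)) as [[p Hp]|Hno].
  - destruct p as [|b p0]; [subst; contradiction|].
    destruct (exists_last (l:=b::p0) ltac:(discriminate)) as [p' [a Ha]]. rewrite Ha in Hp.
    exists (a :: s). split; [left; eauto|].
    rewrite <- app_assoc in Hp. simpl in Hp.
    split; apply (BH_mid p'); try (rewrite <- Hp; auto).
    + destruct (BH_suffix _ _ Hsv) as [q ->]. exists (a :: q). reflexivity.
    + destruct (BH_suffix _ _ Hsw) as [q ->]. exists (a :: q). reflexivity.
  - destruct s as [|st t].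
    + exfalso. apply Hno. exists s0. rewrite app_nil_r. reflexivity.
    + exists t. split; [right; eauto|]. split; apply (BH_up st); auto; intros E; apply Hno.
      * destruct (BH_suffix _ _ Hs0v) as [q Hq]. exists q. rewrite <- E. exact Hq.
      * destruct (BH_suffix _ _ Hs0w) as [q Hq]. exists q. rewrite <- E. exact Hq.
Qed.

Lemma Uhat_torso s : torso_in U Uhat TH BH s.
Proof.
  exists (fs s). split.
  - intros v w Hv Hw E. rewrite <- (fs_spec _ _ Hv), <- (fs_spec _ _ Hw), E. reflexivity.
  - intros v w [Hv [Hw [Hne [Hadj|[t [Ht [Htv Htw]]]]]]].
    + destruct Hadj as [s0 [a [b [Ha [Hb Hab]]]]].
      destruct (classic (s = s0)) as [<-|Hs].
      * rewrite <- (fs_spec _ _ Hv) in Ha. rewrite <- (fs_spec _ _ Hw) in Hb.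
        apply R_inj in Ha, Hb. rewrite <- Ha, <- Hb. exact Hab.
      * destruct (nbr_exists s s0 v w Hs Hv (ex_intro _ a Ha) Hw (ex_intro _ b Hb)) as [t [Ht [Htv Htw]]].
        eapply nbr_case; eauto.
    + eapply nbr_case; eauto.
Qed.

Lemma Uhat_inD : inD U Uhat.
Proof. exists TH, BH. split; [exact Uhat_td|exact Uhat_torso]. Qed.

End UHat.

Lemma least_nat (P : nat -> Prop) : (exists n, P n) -> exists n, P n /\ forall m, P m -> n <= m.
Proof.
  intros [n Hn]. induction n as [n IH] using lt_wf_ind.
  destruct (classic (exists m, m < n /\ P m)) as [[m [Hm Pm]]|Hno].
  - exact (IH m Hm Pm).
  - exists n. split; auto. intros m Pm. destruct (le_lt_dec n m); auto. exfalso; eauto.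
Qed.

Lemma walk_split {X} (E : X -> X -> Prop) Q l1 : forall a l2 b, walk_in E Q a (l1 ++ l2) b ->
  exists c, walk_in E Q a l1 c /\ walk_in E Q c l2 b.
Proof.
  induction l1 as [|z l1 IH]; intros a l2 b H; simpl in *.
  - exists a. split; [split; auto|exact H]. destruct l2; simpl in H; tauto.
  - destruct H as [Hq [He Hw]]. destruct (IH _ _ _ Hw) as [c [W1 W2]]. exists c. tauto.
Qed.

Section Embed.
Variables U G : graph.
Variable T : tree.
Variable B : tnode T -> vert G -> Prop.
Hypothesis HU : ~ contains_Kaleph0 U.
Hypothesis Htd : is_tree_decomposition G T B.
Hypothesis Htor : forall x, torso_in U G T B x.
Variable r : tnode T.

Notation E := (tadj T).

Definition walklen x n := exists l, length l = n /\ walk_in E (fun _ => True) r l x.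

Lemma d_ex x : exists n, walklen x n /\ forall m, walklen x m -> n <= m.
Proof.
  apply least_nat. destruct (tconnected T r x) as [l Hl]. exists (length l), l. auto.
Qed.

Definition d x := proj1_sig (constructive_indefinite_description _ (d_ex x)).
Lemma d_spec x : walklen x (d x) /\ forall m, walklen x m -> d x <= m.
Proof. unfold d. destruct (constructive_indefinite_description _ _); auto. Qed.

Lemma d_r : d r = 0.
Proof. pose proof (proj2 (d_spec r) 0). assert (walklen r 0) by (exists []; simpl; auto). specialize (H H0). lia. Qed.

Lemma d_zero x : d x = 0 -> x = r.
Proof.
  intros H. destruct (proj1 (d_spec x)) as [l [Hl Hw]]. rewrite H in Hl.
  destruct l; [|discriminate]. simpl in Hw. symmetry; tauto.
Qed.

Lemma d_adj x y : E x y -> d y <= S (d x).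
Proof.
  intros Hxy. destruct (proj1 (d_spec x)) as [l [Hl Hw]]. apply (proj2 (d_spec y)).
  exists (l ++ [y]). split; [rewrite length_app; simpl; lia|].
  eapply walk_app; eauto. simpl. tauto.
Qed.

Lemma d_pred x : x <> r -> exists y, E x y /\ S (d y) = d x.
Proof.
  intros Hx. destruct (proj1 (d_spec x)) as [l [Hl Hw]].
  destruct l as [|a l0]; [simpl in Hw; exfalso; apply Hx; symmetry; tauto|].
  destruct (exists_last (l:=a::l0) ltac:(discriminate)) as [l' [z Hz]]. rewrite Hz in Hw, Hl.
  destruct (walk_split _ _ _ _ _ _ Hw) as [c [W1 W2]]. simpl in W2.
  destruct W2 as [_ [Hcz [_ Hzx]]]. subst z.
  exists c. split; [apply tadj_sym; auto|].
  pose proof (proj2 (d_spec c) (length l') ltac:(exists l'; auto)).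
  pose proof (d_adj _ _ Hcz). rewrite length_app in Hl. simpl in Hl. lia.
Qed.

Definition par x : tnode T :=
  match excluded_middle_informative (x = r) with
  | left _ => r
  | right H => proj1_sig (constructive_indefinite_description _ (d_pred x H)) end.

Lemma par_spec x : x <> r -> E x (par x) /\ S (d (par x)) = d x.
Proof.
  intros H. unfold par. destruct (excluded_middle_informative (x = r)); [contradiction|].
  destruct (constructive_indefinite_description _ _); auto.
Qed.

Lemma par_r : par r = r.
Proof. unfold par. destruct (excluded_middle_informative (r = r)); congruence. Qed.

Fixpoint anc x k := match k with 0 => x | S k => par (anc x k) end.

Lemma anc_S_r x k : anc x (S k) = anc (par x) k.
Proof. induction k; simpl in *; congruence. Qed.

Lemma anc_depth x k : k <= d x -> d (anc x k) = d x - k.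
Proof.
  induction k; intros Hk; simpl; [lia|].
  specialize (IHk ltac:(lia)).
  assert (anc x k <> r) by (intros E'; rewrite E', d_r in IHk; lia).
  pose proof (proj2 (par_spec _ H)). rewrite IHk in H0. lia.
Qed.

Lemma anc_r x k : d x <= k -> anc x k = r.
Proof.
  intros Hk. induction k as [|k IH].
  - simpl. apply d_zero. lia.
  - destruct (Nat.eq_dec (d x) (S k)) as [e|ne].
    + apply d_zero. rewrite anc_depth; lia.
    + simpl. rewrite IH by lia. apply par_r.
Qed.

Lemma anc_edge x k : k < d x -> E (anc x k) (anc x (S k)).
Proof.
  intros Hk. simpl. apply par_spec. intros E'. pose proof (anc_depth x k ltac:(lia)).
  rewrite E', d_r in H. lia.
Qed.

Lemma KL x y : E x y -> par y = x \/ par x = y.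
Proof.
  intros Hxy. apply NNPP. intros Hn. apply (tacyclic T).
  assert (H1 : par y <> x) by tauto. assert (H2 : par x <> y) by tauto. clear Hn.
  assert (Hxy' : x <> y) by (intros ->; exact (tadj_irrefl T _ Hxy)).
  set (P := fun i => exists j, j <= d y /\ anc x i = anc y j).
  destruct (least_nat P) as [i [[j [Hj Hij]] Hmin]].
  { exists (d x), (d y). split; auto. rewrite !anc_r; auto. }
  assert (Hi : i <= d x).
  { apply Hmin. exists (d y). split; auto. rewrite !anc_r; auto. }
  set (n := i + j).
  set (g := fun k => if Nat.leb k i then anc x k else anc y (i + j - k)).
  assert (gle : forall k, k <= i -> g k = anc x k).
  { intros k Hk. unfold g. rewrite (proj2 (Nat.leb_le k i) Hk). reflexivity. }
  assert (ggt : forall k, i < k -> g k = anc y (i + j - k)).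
  { intros k Hk. unfold g. destruct (Nat.leb k i) eqn:L; [apply Nat.leb_le in L; lia|reflexivity]. }
  assert (Hn2 : 2 <= n).
  { unfold n. destruct i as [|[|i']]; destruct j as [|[|j']]; simpl in *; try lia.
    - exfalso; auto.
    - exfalso; apply H1; auto.
    - exfalso; apply H2; auto. }
  assert (g0 : g 0 = x) by (rewrite gle by lia; reflexivity).
  assert (gn : g n = y).
  { unfold n. destruct j. - rewrite gle by lia. rewrite Nat.add_0_r, Hij. reflexivity.
    - rewrite ggt by lia. replace (i + S j - (i + S j)) with 0 by lia. reflexivity. }
  assert (gE : forall k, k < n -> E (g k) (g (S k))).
  { intros k Hk. destruct (lt_dec k i).
    - rewrite !gle by lia. apply anc_edge. lia.
    - rewrite (ggt (S k)) by lia. apply tadj_sym.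
      assert (Hgk : g k = anc y (S (i + j - S k))).
      { destruct (Nat.eq_dec k i) as [->|].
        + rewrite gle by lia. rewrite Hij. f_equal. lia.
        + rewrite ggt by lia. f_equal. lia. }
      rewrite Hgk. apply anc_edge. lia. }
  assert (gdep : forall k, k <= n -> d (g k) = if Nat.leb k i then d x - k else d y - (i + j - k)).
  { intros k Hk. unfold g. destruct (Nat.leb k i) eqn:L.
    - apply Nat.leb_le in L. apply anc_depth. lia.
    - apply Nat.leb_gt in L. apply anc_depth. lia. }
  assert (ginj : forall a b, a <= n -> b <= n -> g a = g b -> a = b).
  { assert (K : forall a b, a < b -> b <= n -> g a = g b -> False).
    { intros a b Hab Hb Hg. pose proof (gdep a ltac:(lia)) as Da. pose proof (gdep b Hb) as Db.
      rewrite Hg in Da. rewrite Da in Db.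
      destruct (Nat.leb a i) eqn:La, (Nat.leb b i) eqn:Lb;
        try apply Nat.leb_le in La; try apply Nat.leb_le in Lb;
        try apply Nat.leb_gt in La; try apply Nat.leb_gt in Lb; try lia.
      (* a <= i < b *)
      rewrite gle in Hg by lia. rewrite ggt in Hg by lia.
      assert (i <= a) by (apply Hmin; exists (i + j - b); split; [lia|exact Hg]).
      assert (Hab2 : a = i) by lia. subst a. unfold n in Hb. assert (Hd := anc_depth y (i + j - b) ltac:(lia)). assert (Hd2 := anc_depth y j Hj). rewrite <- Hg, Hij in Hd. rewrite Hd in Hd2. lia. }
    intros a b Ha Hb Hg. destruct (lt_eq_lt_dec a b) as [[?|?]|?]; auto.
    - exfalso; eapply K; eauto.
    - exfalso; eapply K; eauto. }
  exists (g 0), (map g (seq 1 n)), (g n). split; [|split; [|split]].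
  - change (g 0 :: map g (seq 1 n)) with (map g (seq 0 (S n))).
    apply NoDup_map_NoDup_ForallPairs; [|apply seq_NoDup].
    intros a b Ha Hb. apply in_seq in Ha, Hb. apply ginj; lia.
  - rewrite length_map, length_seq. exact Hn2.
  - apply walk_fun; auto.
  - rewrite gn, g0. apply tadj_sym; exact Hxy.
Qed.

Lemma home_ex v : exists n, (exists x, B x v /\ d x = n) /\ forall m, (exists x, B x v /\ d x = m) -> n <= m.
Proof.
  apply least_nat. destruct (proj1 (proj2 Htd v)) as [x Hx]. eauto.
Qed.

Definition hom v : tnode T :=
  proj1_sig (constructive_indefinite_description _
    (proj1 (proj2_sig (constructive_indefinite_description _ (home_ex v))))).

Lemma hom_spec v : B (hom v) v /\ forall x, B x v -> d (hom v) <= d x.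
Proof.
  unfold hom. destruct (constructive_indefinite_description _ (home_ex v)) as [n [Hn Hm]]. simpl.
  destruct (constructive_indefinite_description _ _) as [x [Hx Hd]]. simpl.
  split; auto. intros y Hy. rewrite Hd. apply Hm. eauto.
Qed.

Definition desc x z := exists k, anc z k = x.

Lemma L1 x v : B x v -> x <> hom v -> B (par x) v.
Proof.
  intros Hx Hne. destruct (hom_spec v) as [Hh Hmin].
  destruct (proj2 (proj2 Htd v) x (hom v) Hx Hh) as [l Hw].
  destruct (walk_nth _ _ _ _ _ Hw) as [HE [HS Hlast]].
  pose (g := fun k => nth k (x :: l) x).
  assert (gE : forall k, k < length l -> E (g k) (g (S k))) by exact HE.
  assert (gS : forall k, k <= length l -> B (g k) v) by exact HS.
  assert (gL : g (length l) = hom v) by exact Hlast.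
  assert (g0 : g 0 = x) by reflexivity.
  clearbody g. clear HE HS Hlast.
  destruct (exit_index (fun k => desc x (g k)) (length l)) as [k [Hk [Dk NDk]]].
  - exists 0. simpl. exact g0.
  - cbv beta. rewrite gL. intros [k Hk]. pose proof (Hmin x Hx) as Hdx.
    destruct (le_lt_dec k (d (hom v))).
    + destruct k. * simpl in Hk. auto.
      * pose proof (anc_depth (hom v) (S k) l0). rewrite Hk in H. lia.
    + rewrite anc_r in Hk by lia. rewrite <- Hk, d_r in Hdx.
      apply Hne. rewrite <- Hk. symmetry. apply d_zero. lia.
  - cbv beta in Dk, NDk.
    pose proof (gE k Hk) as Ek. pose proof (gS (S k) ltac:(lia)) as Bk.
    destruct Dk as [m Hm].
    destruct (KL _ _ Ek) as [Hp|Hp].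
    + exfalso. apply NDk. exists (S m). rewrite anc_S_r. rewrite Hp. exact Hm.
    + destruct m as [|m].
      * simpl in Hm. rewrite <- Hm, Hp. exact Bk.
      * exfalso. apply NDk. exists m. rewrite <- Hp, <- anc_S_r. exact Hm.
Qed.

Definition F x : vert G -> vert U := proj1_sig (constructive_indefinite_description _ (Htor x)).
Lemma F_spec x : (forall v w, B x v -> B x w -> F x v = F x w -> v = w) /\
  (forall v w, torso_adj G T B x v w -> adj U (F x v) (F x w)).
Proof. unfold F. destruct (constructive_indefinite_description _ _); auto. Qed.

Definition Adh x v := B x v /\ B (par x) v.

Lemma adh_finite x : x <> r -> exists l, forall v, In v l <-> Adh x v.
Proof.
  intros Hx. apply (clique_finite U HU _ (Adh x) (F x)).
  - intros a b [Ha _] [Hb _]. apply (proj1 (F_spec x)); auto.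
  - intros a b [Ha Ha'] [Hb Hb'] Hab. apply (proj2 (F_spec x)).
    split; [auto|split; [auto|split; [auto|right]]]. exists (par x). split; auto. apply par_spec; auto.
Qed.

Definition Ladh x : list (vert G) :=
  match excluded_middle_informative (x = r) with
  | left _ => []
  | right H => proj1_sig (constructive_indefinite_description _ (adh_finite x H)) end.

Lemma Ladh_spec x : x <> r -> forall v, In v (Ladh x) <-> Adh x v.
Proof.
  intros H. unfold Ladh. destruct (excluded_middle_informative (x = r)); [contradiction|].
  destruct (constructive_indefinite_description _ _); auto.
Qed.

Definition gl x := map (fun a => (F (par x) a, F x a)) (Ladh x).

Lemma gl_in x p : In p (gl x) -> x <> r /\ exists a, p = (F (par x) a, F x a) /\ Adh x a.
Proof.
  unfold gl. intros H. apply in_map_iff in H. destruct H as [a [<- Ha]].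
  destruct (classic (x = r)) as [Hr|Hr].
  - exfalso. unfold Ladh in Ha. destruct (excluded_middle_informative (x = r)); [exact Ha|contradiction].
  - split; auto. exists a. split; auto. apply Ladh_spec; auto.
Qed.

Lemma gl_valid x : valid U (gl x).
Proof.
  split; [|split].
  - intros p q Hp Hq. destruct (gl_in _ _ Hp) as [Hr [a [-> [Ha Ha']]]].
    destruct (gl_in _ _ Hq) as [_ [b [-> [Hb Hb']]]]. simpl. split; intros E'.
    + f_equal. apply (proj1 (F_spec (par x))); auto.
    + f_equal. apply (proj1 (F_spec x)); auto.
  - intros p q Hp Hq. destruct (gl_in _ _ Hp) as [Hr [a [-> [Ha Ha']]]].
    destruct (gl_in _ _ Hq) as [_ [b [-> [Hb Hb']]]]. simpl. intros Hne.
    apply (proj2 (F_spec (par x))). split; [auto|split; [auto|split; [intros ->; auto|right]]].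
    exists x. split; auto. apply tadj_sym, par_spec; auto.
  - intros p q Hp Hq. destruct (gl_in _ _ Hp) as [Hr [a [-> [Ha Ha']]]].
    destruct (gl_in _ _ Hq) as [_ [b [-> [Hb Hb']]]]. simpl. intros Hne.
    apply (proj2 (F_spec x)). split; [auto|split; [auto|split; [intros ->; auto|right]]].
    exists (par x). split; auto. apply par_spec; auto.
Qed.

Definition gG : vert G -> nat := proj1_sig (constructive_indefinite_description _ (vert_countable G)).
Lemma gG_inj a b : gG a = gG b -> a = b.
Proof. unfold gG. destruct (constructive_indefinite_description _ _); auto. Qed.

Definition cidx x : nat :=
  match excluded_middle_informative (exists v, hom v = x) with
  | left H => gG (proj1_sig (constructive_indefinite_description _ H))
  | right _ => 0 end.

Lemma cidx_spec x : (exists v, hom v = x) -> exists w, hom w = x /\ cidx x = gG w.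
Proof.
  intros H. unfold cidx. destruct (excluded_middle_informative _); [|contradiction].
  destruct (constructive_indefinite_description _ _) as [w Hw]. eauto.
Qed.

Definition mkstep x : Step U := exist (fun g => valid U (fst g)) (gl x, cidx x) (gl_valid x).

Fixpoint phin n x : list (Step U) := match n with 0 => [] | S n => mkstep x :: phin n (par x) end.
Definition phi x := phin (d x) x.

Lemma phin_len n x : length (phin n x) = n.
Proof. revert x; induction n; intros; simpl; auto. Qed.

Lemma phi_r : phi r = [].
Proof. unfold phi. rewrite d_r. reflexivity. Qed.

Lemma phi_S x : x <> r -> phi x = mkstep x :: phi (par x).
Proof. intros H. unfold phi. rewrite <- (proj2 (par_spec x H)). reflexivity. Qed.

Definition psi v : VH U := R U (phi (hom v)) (F (hom v) v).

Lemma consist v n : forall x, d x = n -> B x v -> R U (phi x) (F x v) = psi v.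
Proof.
  induction n as [|n IH]; intros x Hd Hx.
  - apply d_zero in Hd. subst x. destruct (hom_spec v) as [_ Hm].
    pose proof (Hm r Hx). rewrite d_r in H. assert (hom v = r) by (apply d_zero; lia).
    unfold psi. rewrite H0. reflexivity.
  - destruct (classic (x = hom v)) as [->|Hne]; [reflexivity|].
    assert (Hr : x <> r) by (intros ->; rewrite d_r in Hd; discriminate).
    pose proof (L1 x v Hx Hne) as Hp.
    assert (Hin : In (F (par x) v, F x v) (gl x)).
    { unfold gl. apply in_map_iff. exists v. split; auto. apply Ladh_spec; auto. split; auto. }
    rewrite <- (IH (par x)); [|pose proof (proj2 (par_spec x Hr)); lia|auto].
    apply VH_eq. simpl. rewrite phi_S by auto. simpl.
    change (glue U (mkstep x)) with (gl x).
    rewrite (lookup_in U (gl x) (F x v) (F (par x) v) (gl_valid x) Hin). reflexivity.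
Qed.

Lemma psi_raw v : proj1_sig (psi v) = (phi (hom v), F (hom v) v).
Proof.
  unfold psi. simpl. destruct (hom_spec v) as [Hh Hm].
  destruct (classic (hom v = r)) as [Hr|Hr].
  - rewrite Hr. rewrite phi_r. reflexivity.
  - rewrite phi_S by auto. simpl. change (glue U (mkstep (hom v))) with (gl (hom v)).
    destruct (lookup U (gl (hom v)) (F (hom v) v)) as [k|] eqn:L; [|reflexivity].
    exfalso. apply lookup_some in L. destruct (gl_in _ _ L) as [_ [a [Ea [Ha Ha']]]].
    injection Ea as _ Ea. apply (proj1 (F_spec (hom v))) in Ea; auto. subst a.
    pose proof (Hm _ Ha'). pose proof (proj2 (par_spec _ Hr)). lia.
Qed.

Lemma psi_inj v w : psi v = psi w -> v = w.
Proof.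
  intros H. apply (f_equal (@proj1_sig _ _)) in H. rewrite !psi_raw in H. injection H as Hphi HF.
  assert (Hh : hom v = hom w).
  { pose proof (f_equal (@length _) Hphi) as Hl. unfold phi in Hl. rewrite !phin_len in Hl.
    destruct (Nat.eq_dec (d (hom v)) 0) as [e|ne].
    - rewrite (d_zero _ e). symmetry. apply d_zero. lia.
    - assert (Hv : hom v <> r) by (intros E'; rewrite E', d_r in ne; auto).
      assert (Hw : hom w <> r) by (intros E'; rewrite E', d_r in Hl; auto).
      rewrite (phi_S (hom v) Hv), (phi_S (hom w) Hw) in Hphi. assert (Hst : mkstep (hom v) = mkstep (hom w)) by congruence.
      apply (f_equal (fun st => snd (proj1_sig st))) in Hst. simpl in Hst.
      destruct (cidx_spec (hom v) (ex_intro _ v eq_refl)) as [a [Ha Ca]].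
      destruct (cidx_spec (hom w) (ex_intro _ w eq_refl)) as [b [Hb Cb]].
      rewrite Ca, Cb in Hst. apply gG_inj in Hst. subst b. congruence. }
  rewrite <- Hh in HF. apply (proj1 (F_spec (hom v))); auto.
  - apply hom_spec.
  - rewrite Hh. apply hom_spec.
Qed.

Lemma embed : contains (Uhat U) G.
Proof.
  exists psi. split; [exact psi_inj|].
  intros v w Hvw. destruct (proj1 Htd v w Hvw) as [x [Hv Hw]].
  exists (phi x), (F x v), (F x w). split; [apply (consist v (d x)); auto|].
  split; [apply (consist w (d x)); auto|].
  apply (proj2 (F_spec x)). split; [auto|split; [auto|split; [|left; auto]]].
  intros ->. exact (adj_irrefl G _ Hvw).
Qed.

End Embed.

Theorem mainTheorem14 :
  forall U : graph, ~ contains_Kaleph0 U ->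
    exists Uhat : graph, inD U Uhat /\ (forall G : graph, inD U G -> contains Uhat G).
Proof.
  intros U HU. exists (Uhat U). split; [apply Uhat_inD|].
  intros G [T [B [Htd Htor]]].
  destruct (classic (exists r : tnode T, True)) as [[r _]|Hno].
  - exact (embed U G T B HU Htd Htor r).
  - assert (Hf : vert G -> False).
    { intros v. destruct (proj1 (proj2 Htd v)) as [x _]. apply Hno. exists x. exact I. }
    exists (fun v => False_rect _ (Hf v)). split; intros v; exfalso; exact (Hf v).
Qed.
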